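(* Every $f=\sum\hat f_{\alpha,\beta;\omega}E_{\alpha,\beta}\star e_\omega\in\mathscr{F}_n(\mathbb{C}^d)$ defines, via formal evaluation $X\mapsto\mathrm{ev}_X(f)=\sum\hat f_{\alpha,\beta;\omega}\,E_{\alpha,\beta}\star e_\omega(X)$, a graded and direct sum-preserving function on $\bigsqcup_{m\ge1}\{X\in\mathbb{C}^{(mn\times mn)\cdot d}:\|X\|_{\mathrm{col}}<\frac1{\sqrt n}\}$.
   Context: Equip $\mathbb{C}^{n\times n}$ with the Hilbert–Schmidt inner product and let $\mathscr{F}_n(\mathbb{C}^d)=\bigoplus_{\ell\ge0}\mathbb{C}^{n\times n}\otimes(\mathbb{C}^d\otimes\mathbb{C}^{n\times n})^{\otimes\ell}$. With $E_{i,j}$ the matrix units of $\mathbb{C}^{n\times n}$ and $e_k$ the standard basis of $\mathbb{C}^d$, for words $\alpha=a_0\cdots a_\ell,\beta=b_0\cdots b_\ell$ in $\{1,\dots,n\}$ and $\omega=w_1\cdots w_\ell$ in $\{1,\dots,d\}$, $E_{\alpha,\beta}\star e_\omega=E_{a_0,b_0}\otimes e_{w_1}\otimes E_{a_1,b_1}\otimes\cdots\otimes e_{w_\ell}\otimes E_{a_\ell,b_\ell}$; these form an orthonormal basis, and $\hat f_{\alpha,\beta;\omega}$ are the coefficients of $f$ in it. For $X\in\mathbb{C}^{(mn\times mn)\cdot d}$ (column $d$-tuples of $mn\times mn$ matrices, $\|X\|_{\mathrm{col}}$ the operator norm of the stacked matrix), $E_{\alpha,\beta}\star e_\omega(X)=(I_m\otimes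 E_{a_0,b_0})X_{w_1}(I_m\otimes E_{a_1,b_1})\cdots X_{w_\ell}(I_m\otimes E_{a_\ell,b_\ell})$. Graded means $\mathrm{ev}_X(f)\in\mathbb{C}^{mn\times mn}$ for $X$ at level $mn$; direct sum-preserving means $\mathrm{ev}_{X\oplus X'}(f)=\mathrm{ev}_X(f)\oplus\mathrm{ev}_{X'}(f)$. *)

(* Defs.v *)
From HB Require Import structures.
From mathcomp Require Import all_boot all_order all_algebra.
From mathcomp Require Import complex.
From mathcomp Require Import boolp classical_sets reals.
Set Implicit Arguments. Unset Strict Implicit. Unset Printing Implicit Defensive.
Import Order.TTheory GRing.Theory Num.Theory.
Local Open Scope ring_scope.

Section FockDefs.
Variable R : realType.
Local Notation C := R[i].

(* coefficient families  \hat f_{alpha,beta;omega}: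
   level l, alpha beta : words of length l+1 in {0..n-1},
   omega : word of length l in {0..d-1} *)
Definition coeffs (n d : nat) :=
  forall l : nat, {ffun 'I_l.+1 -> 'I_n} -> {ffun 'I_l.+1 -> 'I_n} ->
                  {ffun 'I_l -> 'I_d} -> C.

Definition level_sqnorm (n d : nat) (fh : coeffs n d) (l : nat) : R :=
  \sum_(a : {ffun 'I_l.+1 -> 'I_n}) \sum_(b : {ffun 'I_l.+1 -> 'I_n})
    \sum_(w : {ffun 'I_l -> 'I_d}) (ComplexField.Normc.normc (fh l a b w)) ^+ 2.

Definition in_fock (n d : nat) (fh : coeffs n d) : Prop :=
  exists B : R, forall N : nat, \sum_(l < N) level_sqnorm fh l <= B.

(* I_m (x) E_{a,b} in C^{mn x mn}: block-diagonal with m copies of E_{a,b};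
   row index i = (block) * n + (inner index) *)
Definition ampE (m n : nat) (a b : 'I_n) : 'M[C]_(m * n) :=
  \matrix_(i, j) (if [&& (i %/ n == j %/ n)%N, (i %% n == a)%N & (j %% n == b)%N]
                  then 1 else 0).

(* E_{alpha,beta} * e_omega (X)
   = (I(x)E_{a0,b0}) X_{w1} (I(x)E_{a1,b1}) ... X_{wl} (I(x)E_{al,bl}) *)
Definition word_eval (m n d l : nat) (a b : {ffun 'I_l.+1 -> 'I_n})
    (w : {ffun 'I_l -> 'I_d}) (X : 'I_d -> 'M[C]_(m * n)) : 'M[C]_(m * n) :=
  foldr (fun (k : 'I_l) (acc : 'M[C]_(m * n)) =>
           ampE m (a (widen_ord (leqnSn l) k)) (b (widen_ord (leqnSn l) k))
             *m X (w k) *m acc)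
        (ampE m (a ord_max) (b ord_max)) (enum 'I_l).

Definition level_eval (m n d : nat) (fh : coeffs n d) (l : nat)
    (X : 'I_d -> 'M[C]_(m * n)) : 'M[C]_(m * n) :=
  \sum_(a : {ffun 'I_l.+1 -> 'I_n}) \sum_(b : {ffun 'I_l.+1 -> 'I_n})
    \sum_(w : {ffun 'I_l -> 'I_d}) fh l a b w *: word_eval a b w X.

Definition partial_eval (m n d : nat) (fh : coeffs n d)
    (X : 'I_d -> 'M[C]_(m * n)) (N : nat) : 'M[C]_(m * n) :=
  \sum_(l < N) level_eval fh l X.

Definition mx_cvg_to (p q : nat) (S : nat -> 'M[C]_(p, q)) (L : 'M[C]_(p, q)) : Prop :=
  forall (i : 'I_p) (j : 'I_q) (eps : R), 0 < eps ->
    exists N0 : nat, forall N : nat, (N0 <= N)%N -> ComplexField.Normc.normc (S N i j - L i j) < eps.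

Definition vnorm (k : nat) (v : 'cV[C]_k) : R :=
  Num.sqrt (\sum_(i < k) (ComplexField.Normc.normc (v i 0)) ^+ 2).

(* ||X||_col : operator norm of the stacked (dk x k) matrix [X_1; ...; X_d] *)
Definition colnorm (d k : nat) (X : 'I_d -> 'M[C]_k) : R :=
  sup [set r : R | exists v : 'cV[C]_k, vnorm v <= 1 /\
         r = Num.sqrt (\sum_(j < d) (vnorm (X j *m v)) ^+ 2)]%classic.

Definition dsum (m m' n d : nat) (X : 'I_d -> 'M[C]_(m * n))
    (X' : 'I_d -> 'M[C]_(m' * n)) : 'I_d -> 'M[C]_((m + m') * n) :=
  fun j => castmx (esym (mulnDl m m' n), esym (mulnDl m m' n))
                  (block_mx (X j) 0 0 (X' j)).

Definition mx_dsum (m m' n : nat) (A : 'M[C]_(m * n)) (B : 'M[C]_(m' * n))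
    : 'M[C]_((m + m') * n) :=
  castmx (esym (mulnDl m m' n), esym (mulnDl m m' n)) (block_mx A 0 0 B).

End FockDefs.

(* Main.v *)
Require Import Defs.
From HB Require Import structures.
From mathcomp Require Import all_boot all_order all_algebra.
From mathcomp Require Import complex.
From mathcomp Require Import boolp classical_sets reals.
From mathcomp Require Import ring lra zify.
From Stdlib Require Import Lia.
Import Order.TTheory GRing.Theory Num.Theory.
Local Open Scope ring_scope.

Section Helpers.
Variable R : realType.
Local Notation C := R[i].
Local Notation nc := (@ComplexField.Normc.normc R).

Lemma nc_ge0 (x : C) : 0 <= nc x.
Proof. by case: x => a b; rewrite /= sqrtr_ge0. Qed.

Lemma nc0 : nc 0 = 0.
Proof. exact: ComplexField.Normc.normc0. Qed.

Lemma nc_sum (I : Type) (r : seq I) (P : pred I) (F : I -> C) :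
  nc (\sum_(i <- r | P i) F i) <= \sum_(i <- r | P i) nc (F i).
Proof.
apply: (big_ind2 (fun x y => nc x <= y)); first by rewrite nc0.
  by move=> x1 y1 x2 y2 h1 h2; apply: le_trans (le_normcD _ _) (lerD h1 h2).
by [].
Qed.

Lemma nc_Re (x : C) : `|complex.Re x| <= nc x.
Proof.
case: x => a b /=; rewrite -sqrtr_sqr ler_sqrt ?addr_ge0 ?sqr_ge0 //.
by rewrite lerDl sqr_ge0.
Qed.

Lemma nc_Im (x : C) : `|complex.Im x| <= nc x.
Proof.
case: x => a b /=; rewrite -sqrtr_sqr ler_sqrt ?addr_ge0 ?sqr_ge0 //.
by rewrite lerDr sqr_ge0.
Qed.

Lemma nc_ReIm (x : C) : nc x <= `|complex.Re x| + `|complex.Im x|.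
Proof.
case: x => a b /=.
rewrite -[X in _ <= X]ger0_norm ?addr_ge0 // -sqrtr_sqr ler_sqrt ?sqr_ge0 //.
rewrite sqrrD -[a ^+ 2]real_normK ?num_real // -[b ^+ 2]real_normK ?num_real //.
by rewrite -addrA lerD2l lerDr mulrn_wge0 // mulr_ge0.
Qed.

Lemma am_gm (x y : R) : x * y <= x ^+ 2 + y ^+ 2.
Proof. nra. Qed.

Lemma mono_cvg (u : nat -> R) (M : R) :
  (forall N, u N <= u N.+1) -> (forall N, u N <= M) ->
  forall eps, 0 < eps -> exists N0, forall N, (N0 <= N)%N ->
    `|u N - sup (range u)| < eps.
Proof.
move=> hinc hM eps he.
have hs : has_sup (range u).
  split; first by exists (u 0%N), 0%N.
  by exists M => _ [k _ <-].
have [_ [N0 _ <-] hN0] := sup_adherent he hs.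
exists N0 => N hN.
have mono : u N0 <= u N.
  elim: N hN => [|N IH]; first by rewrite leqn0 => /eqP ->.
  rewrite leq_eqVlt ltnS => /predU1P [-> //|/IH h].
  exact: le_trans h (hinc N).
have ub : u N <= sup (range u) by apply: sup_upper_bound => //; exists N.
rewrite distrC ger0_norm ?subr_ge0 //.
by rewrite ltrBlDr -ltrBlDl; apply: lt_le_trans hN0 mono.
Qed.

Definition limR (x : nat -> R) : R :=
  sup (range (fun N => \sum_(l < N) (`|x l| + x l)))
  - sup (range (fun N => \sum_(l < N) `|x l|)).

Lemma limR_cvg (x : nat -> R) (M : R) :
  (forall N, \sum_(l < N) `|x l| <= M) ->
  forall eps, 0 < eps -> exists N0, forall N, (N0 <= N)%N ->
    `|\sum_(l < N) x l - limR x| < eps.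
Proof.
move=> hM eps he.
have he2 : 0 < eps / 2 by rewrite divr_gt0.
have i1 : forall N, \sum_(l < N) (`|x l| + x l) <= \sum_(l < N.+1) (`|x l| + x l).
  by move=> N; rewrite big_ord_recr /= lerDl -lerBlDr sub0r -normrN ler_norm.
have b1 : forall N, \sum_(l < N) (`|x l| + x l) <= M + M.
  move=> N; rewrite big_split /=; apply: lerD; first exact: hM.
  apply: le_trans (hM N).
  by apply: ler_sum => i _; apply: ler_norm.
have i2 : forall N, \sum_(l < N) `|x l| <= \sum_(l < N.+1) `|x l|.
  by move=> N; rewrite big_ord_recr /= lerDl.
have [N1 h1] := mono_cvg _ _ i1 b1 _ he2.
have [N2 h2] := mono_cvg _ _ i2 hM _ he2.
exists (maxn N1 N2) => N hN.
have := h1 N; have := h2 N.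
rewrite geq_max in hN; case/andP: hN => hN1 hN2.
move=> /(_ hN2) k2 /(_ hN1) k1.
rewrite /limR big_split /= in k1 *.
set a := \sum_(l < N) `|x l| in k1 k2 *.
set b := \sum_(l < N) x l in k1 *.
set s1 := sup _ in k1 *; set s2 := sup _ in k2 *.
have -> : b - (s1 - s2) = (a + b - s1) - (a - s2) by ring.
apply: le_lt_trans (ler_normB _ _) _.
by rewrite (splitr eps); apply: ltrD.
Qed.

Definition limC (t : nat -> C) : C :=
  (limR (fun l => complex.Re (t l)) +i* limR (fun l => complex.Im (t l)))%C.

Lemma Re_sum (I : Type) (r : seq I) (F : I -> C) :
  complex.Re (\sum_(i <- r) F i) = \sum_(i <- r) complex.Re (F i).
Proof.
by apply: (big_morph (@complex.Re R)) => // [[a b] [c d]].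
Qed.

Lemma Im_sum (I : Type) (r : seq I) (F : I -> C) :
  complex.Im (\sum_(i <- r) F i) = \sum_(i <- r) complex.Im (F i).
Proof.
by apply: (big_morph (@complex.Im R)) => // [[a b] [c d]].
Qed.

Lemma limC_cvg (t : nat -> C) (M : R) :
  (forall N, \sum_(l < N) nc (t l) <= M) ->
  forall eps, 0 < eps -> exists N0, forall N, (N0 <= N)%N ->
    nc (\sum_(l < N) t l - limC t) < eps.
Proof.
move=> hM eps he.
have he2 : 0 < eps / 2 by rewrite divr_gt0.
have b1 : forall N, \sum_(l < N) `|complex.Re (t l)| <= M.
  by move=> N; apply: le_trans (hM N); apply: ler_sum => i _; apply: nc_Re.
have b2 : forall N, \sum_(l < N) `|complex.Im (t l)| <= M.
  by move=> N; apply: le_trans (hM N); apply: ler_sum => i _; apply: nc_Im.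
have [N1 h1] := limR_cvg (fun l => complex.Re (t l)) M b1 _ he2.
have [N2 h2] := limR_cvg (fun l => complex.Im (t l)) M b2 _ he2.
exists (maxn N1 N2) => N hN.
rewrite geq_max in hN; case/andP: hN => hN1 hN2.
apply: le_lt_trans (nc_ReIm _) _.
have -> : complex.Re (\sum_(l < N) t l - limC t) =
   \sum_(l < N) complex.Re (t l) - limR (fun l => complex.Re (t l)).
  by rewrite -Re_sum; case: (\sum_(l < N) t l).
have -> : complex.Im (\sum_(l < N) t l - limC t) =
   \sum_(l < N) complex.Im (t l) - limR (fun l => complex.Im (t l)).
  by rewrite -Im_sum; case: (\sum_(l < N) t l).
by rewrite (splitr eps); apply: ltrD; [apply: h1 | apply: h2].
Qed.

Lemma limR0 : limR (fun _ => 0) = 0.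
Proof.
rewrite /limR.
have -> : range (fun N => \sum_(l < N) (`|(0:R)| + 0)) = [set (0:R)]%classic.
  apply/seteqP; split => y /=; first by case=> k _ <-; rewrite big1 // normr0 addr0.
  by move=> ->; exists 0%N => //; rewrite big_ord0.
have -> : range (fun N => \sum_(l < N) `|(0:R)|) = [set (0:R)]%classic.
  apply/seteqP; split => y /=; first by case=> k _ <-; rewrite big1 // normr0.
  by move=> ->; exists 0%N => //; rewrite big_ord0.
by rewrite sup1 subrr.
Qed.

Lemma limC0 : limC (fun _ => 0) = 0.
Proof. by rewrite /limC /= limR0. Qed.

End Helpers.

Section Idx.
Variables (m n : nat).
Hypothesis n0 : (0 < n)%N.

Lemma pq_lt (p : 'I_m) (q : 'I_n) : (p * n + q < m * n)%N.
Proof. have := ltn_ord p; have := ltn_ord q; nia. Qed.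

Definition pq (p : 'I_m) (q : 'I_n) : 'I_(m * n) := Ordinal (pq_lt p q).

Lemma pq_div p q : (pq p q %/ n = p)%N.
Proof. by rewrite /= divnMDl // divn_small ?addn0. Qed.

Lemma pq_mod p q : (pq p q %% n = q)%N.
Proof. by rewrite /= modnMDl modn_small. Qed.

Lemma div_lt (k : 'I_(m * n)) : (k %/ n < m)%N.
Proof. by rewrite ltn_divLR. Qed.

Lemma big_pq (V : nmodType) (F : 'I_(m * n) -> V) :
  \sum_k F k = \sum_(p < m) \sum_(q < n) F (pq p q).
Proof.
rewrite pair_big /=.
rewrite (reindex (fun u : 'I_m * 'I_n => pq u.1 u.2)) /=; first by [].
apply: onW_bij.
exists (fun k : 'I_(m * n) => (Ordinal (div_lt k), Ordinal (ltn_pmod k n0))).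
  move=> [p q]; congr pair; apply: val_inj => /=; [exact: pq_div | exact: pq_mod].
by move=> k; apply: val_inj => /=; rewrite -divn_eq.
Qed.
End Idx.
Arguments pq {m n} n0 p q.
Arguments big_pq {m n} n0 {V} F.

Section Mat.
Variable R : realType.
Local Notation C := R[i].
Local Notation nc := (@ComplexField.Normc.normc R).

Definition sqc (k kk : nat) (W : 'M[C]_(k, kk)) (j : 'I_kk) : R :=
  \sum_(r < k) nc (W r j) ^+ 2.
Arguments sqc {k kk}.

Lemma sqc_ge0 k kk (W : 'M[C]_(k, kk)) j : 0 <= sqc W j.
Proof. by apply: sumr_ge0 => i _; rewrite sqr_ge0. Qed.

Variables (m n : nat).
Hypothesis n0 : (0 < n)%N.

Lemma ampE_pq (a b : 'I_n) p q p' q' :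
  ampE R m a b (pq n0 p q) (pq n0 p' q') =
  if [&& (p == p' :> nat), (q == a :> nat) & (q' == b :> nat)] then 1 else 0.
Proof. by rewrite mxE !pq_div !pq_mod. Qed.

Lemma ampE_mul_pq kk (a b : 'I_n) (U : 'M[C]_(m * n, kk)) p q j :
  (ampE R m a b *m U) (pq n0 p q) j = if q == a then U (pq n0 p b) j else 0.
Proof.
rewrite mxE (big_pq n0) (bigD1 p) //= [X in _ + X]big1 ?addr0; last first.
  move=> p' hp'; apply: big1 => q' _; rewrite ampE_pq.
  have hn : (p == p' :> nat) = false by apply/negbTE; rewrite eq_sym.
  by rewrite hn mul0r.
rewrite (bigD1 b) //= [X in _ + X]big1 ?addr0; last first.
  move=> q' hq'; have hn : (q' == b :> nat) = false by apply/negbTE.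
  by rewrite ampE_pq hn !andbF mul0r.
rewrite ampE_pq !eqxx /=.
have -> : (q == a :> nat) = (q == a) by [].
by case: (q == a); rewrite ?andbT ?mul1r ?mul0r.
Qed.

Lemma sqc_ampE kk (U : 'M[C]_(m * n, kk)) j :
  \sum_(a < n) \sum_(b < n) sqc (ampE R m a b *m U) j = n%:R * sqc U j.
Proof.
have h : forall a b : 'I_n, sqc (ampE R m a b *m U) j =
    \sum_(p < m) nc (U (pq n0 p b) j) ^+ 2.
  move=> a b; rewrite /sqc (big_pq n0); apply: eq_bigr => p _.
  rewrite (bigD1 a) //= [X in _ + X]big1 ?addr0.
    by rewrite ampE_mul_pq eqxx.
  by move=> q hq; rewrite ampE_mul_pq (negbTE hq) nc0 expr0n.
under eq_bigr => a _ do under eq_bigr => b _ do rewrite h.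
rewrite sumr_const card_ord mulr_natl; congr (_ *+ _).
by rewrite exchange_big /sqc (big_pq n0).
Qed.
End Mat.
Arguments sqc {R k kk}.

Section Col.
Variable R : realType.
Local Notation C := R[i].
Local Notation nc := (@ComplexField.Normc.normc R).

Lemma ncR (x : R) : nc (x%:C)%C = `|x|.
Proof. by rewrite /= expr0n /= addr0 sqrtr_sqr. Qed.

Lemma sqc_scale k kk (x : R) (W : 'M[C]_(k, kk)) j :
  sqc ((x%:C)%C *: W) j = x ^+ 2 * sqc W j.
Proof.
rewrite /sqc mulr_sumr; apply: eq_bigr => r _.
by rewrite mxE ComplexField.Normc.normcM ncR exprMn real_normK ?num_real.
Qed.

Lemma vnorm_sq k (v : 'cV[C]_k) : vnorm v ^+ 2 = sqc v 0.
Proof. by rewrite /vnorm sqr_sqrtr // sqc_ge0. Qed.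

Lemma nc_le1 k (v : 'cV[C]_k) i : sqc v 0 <= 1 -> nc (v i 0) <= 1.
Proof.
move=> h; rewrite -(expr_le1 (n := 2)) ?nc_ge0 //; apply: le_trans h.
rewrite /sqc (bigD1 i) //= lerDl; apply: sumr_ge0 => r _; exact: sqr_ge0.
Qed.

Variables (d k : nat) (X : 'I_d -> 'M[C]_k).

Let S := [set r : R | exists v : 'cV[C]_k, vnorm v <= 1 /\
         r = Num.sqrt (\sum_(j < d) (vnorm (X j *m v)) ^+ 2)]%classic.

Lemma S0 : S 0.
Proof.
exists 0; split.
  by rewrite /vnorm big1 ?sqrtr0 // => i _; rewrite mxE nc0 expr0n.
rewrite big1 ?sqrtr0 // => j _; rewrite mulmx0 /vnorm big1 ?sqrtr0 ?expr0n //.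
by move=> i _; rewrite mxE nc0 expr0n.
Qed.

Lemma S_sup : has_sup S.
Proof.
split; first by exists 0; exact: S0.
exists (Num.sqrt (\sum_(j < d) \sum_(r < k) (\sum_(c < k) nc (X j r c)) ^+ 2)).
move=> _ [v [hv ->]].
rewrite ler_sqrt; last by do 2 (apply: sumr_ge0 => ? _); exact: sqr_ge0.
have hv1 : sqc v 0 <= 1.
  by rewrite -vnorm_sq expr_le1 // /vnorm sqrtr_ge0.
apply: ler_sum => j _; rewrite vnorm_sq; apply: ler_sum => r _.
rewrite ler_sqr ?qualifE /= ?nc_ge0 //; last by apply: sumr_ge0 => c _; exact: nc_ge0.
rewrite mxE; apply: le_trans (nc_sum _ _ _ _ _) _; apply: ler_sum => c _.
rewrite ComplexField.Normc.normcM; apply: ler_piMr; first exact: nc_ge0.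
exact: nc_le1.
Qed.

Lemma colnorm_ge0 : 0 <= colnorm X.
Proof. exact: (sup_upper_bound S_sup S0). Qed.

Lemma colnorm_bound (v : 'cV[C]_k) :
  \sum_(w < d) sqc (X w *m v) 0 <= colnorm X ^+ 2 * sqc v 0.
Proof.
have hc : colnorm X = sup S by [].
set s := sqc v 0.
have [s0|spos] := eqVneq s 0.
  have v0 : v = 0.
    apply/matrixP => i z; rewrite ord1 mxE.
    have := @psumr_eq0P _ _ xpredT (fun r => nc (v r 0) ^+ 2)
      (fun r _ => sqr_ge0 (nc (v r 0))) s0 i isT.
    move/eqP; rewrite sqrf_eq0 => /eqP; exact: ComplexField.Normc.eq0_normc.
  rewrite s0 mulr0 v0 big1 // => w _; rewrite mulmx0 /sqc big1 // => r _.
  by rewrite mxE nc0 expr0n.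
have sgt : 0 < s by rewrite lt_def spos sqc_ge0.
set t := Num.sqrt s.
have tgt : 0 < t by rewrite sqrtr_gt0.
have hs : s = t ^+ 2 by rewrite sqr_sqrtr // ltW.
set u := ((t^-1)%:C)%C *: v.
have hu : sqc u 0 = 1.
  by rewrite sqc_scale exprVn -hs mulVf.
have Su : S (Num.sqrt (\sum_(j < d) vnorm (X j *m u) ^+ 2)).
  exists u; split => //.
  by rewrite (_ : vnorm u = Num.sqrt (sqc u 0)) // hu sqrtr1.
have hle := sup_upper_bound S_sup Su.
set L := \sum_(w < d) sqc (X w *m v) 0.
have e : \sum_(j < d) vnorm (X j *m u) ^+ 2 = t ^- 2 * L.
  rewrite /L mulr_sumr; apply: eq_bigr => w _.
  by rewrite vnorm_sq -scalemxAr sqc_scale exprVn.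
rewrite e -hc in hle.
have hL0 : 0 <= t ^- 2 * L.
  rewrite mulr_ge0 ?invr_ge0 ?sqr_ge0 //.
  by apply: sumr_ge0 => w _; exact: sqc_ge0.
have h2 : t ^- 2 * L <= colnorm X ^+ 2.
  rewrite -(sqr_sqrtr hL0) ler_sqr ?qualifE /= ?sqrtr_ge0 ?colnorm_ge0 //.
have t2 : t ^+ 2 != 0 by rewrite expf_neq0 // gt_eqF.
by rewrite -(mulVKf t2 L) hs mulrC ler_wpM2r // ?sqr_ge0.
Qed.

Lemma colnorm_bound_mx kk (B : 'M[C]_(k, kk)) j :
  \sum_(w < d) sqc (X w *m B) j <= colnorm X ^+ 2 * sqc B j.
Proof.
have h : forall M : 'M[C]_k, sqc (M *m B) j = sqc (M *m col j B) 0.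
  move=> M; rewrite /sqc; apply: eq_bigr => r _; rewrite !mxE.
  by congr (nc _ ^+ 2); apply: eq_bigr => c _; rewrite !mxE.
have -> : sqc B j = sqc (col j B) 0 by rewrite /sqc; apply: eq_bigr => r _; rewrite mxE.
under eq_bigr => w _ do rewrite h.
exact: colnorm_bound.
Qed.

End Col.

Definition fcons (T : Type) (l : nat) (x : T) (g : {ffun 'I_l -> T}) : {ffun 'I_l.+1 -> T} :=
  [ffun i => if unlift ord0 i is Some k then g k else x].
Arguments fcons {T l} x g.

Lemma fcons0 (T : Type) l (x : T) (g : {ffun 'I_l -> T}) : fcons x g ord0 = x.
Proof. by rewrite ffunE unlift_none. Qed.

Lemma fconsS (T : Type) l (x : T) (g : {ffun 'I_l -> T}) k : fcons x g (lift ord0 k) = g k.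
Proof. by rewrite ffunE liftK. Qed.

Lemma big_ffunS (T : finType) l (V : nmodType) (G : {ffun 'I_l.+1 -> T} -> V) :
  \sum_f G f = \sum_(x : T) \sum_(g : {ffun 'I_l -> T}) G (fcons x g).
Proof.
rewrite pair_big /=.
rewrite (reindex (fun u : T * {ffun 'I_l -> T} => fcons u.1 u.2)) /=; first by [].
apply: onW_bij.
exists (fun f : {ffun 'I_l.+1 -> T} => (f ord0, [ffun k => f (lift ord0 k)])).
  case=> x g /=; rewrite fcons0; congr pair; apply/ffunP => k.
  by rewrite ffunE fconsS.
move=> f; apply/ffunP => i; rewrite ffunE /=.
by case: unliftP => [k ->|->]; rewrite ?ffunE.
Qed.

Lemma big3_rot (I J K : finType) (V : nmodType) (F : I -> J -> K -> V) :
  \sum_i \sum_j \sum_k F i j k = \sum_k \sum_i \sum_j F i j k.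
Proof. by under eq_bigr => i _ do rewrite exchange_big; rewrite exchange_big. Qed.

Section Words.
Variable R : realType.
Local Notation C := R[i].
Local Notation nc := (@ComplexField.Normc.normc R).
Variables (m n d : nat).
Hypothesis n0 : (0 < n)%N.
Variable X : 'I_d -> 'M[C]_(m * n).

Lemma word_eval_fcons l (a0 b0 : 'I_n) (w0 : 'I_d) (a b : {ffun 'I_l.+1 -> 'I_n})
    (w : {ffun 'I_l -> 'I_d}) :
  word_eval (fcons a0 a) (fcons b0 b) (fcons w0 w) X =
  ampE R m a0 b0 *m X w0 *m word_eval a b w X.
Proof.
rewrite /word_eval enum_ordSl /= foldr_map.
have wl : forall k : 'I_l, widen_ord (leqnSn l.+1) (lift ord0 k) =
    lift ord0 (widen_ord (leqnSn l) k) by move=> k; apply: val_inj.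
have w0' : widen_ord (leqnSn l.+1) ord0 = ord0 by apply: val_inj.
have om : (ord_max : 'I_l.+2) = lift ord0 (ord_max : 'I_l.+1) by apply: val_inj.
rewrite w0' !fcons0 om !fconsS; congr (_ *m _).
by elim: (enum 'I_l) => //= k s ->; rewrite wl !fconsS.
Qed.

Variable j : 'I_(m * n).

Definition Tw l := \sum_(a : {ffun 'I_l.+1 -> 'I_n}) \sum_(b : {ffun 'I_l.+1 -> 'I_n})
    \sum_(w : {ffun 'I_l -> 'I_d}) sqc (word_eval a b w X) j.

Lemma big3_ffunS l (V : nmodType)
  (G : {ffun 'I_l.+2 -> 'I_n} -> {ffun 'I_l.+2 -> 'I_n} -> {ffun 'I_l.+1 -> 'I_d} -> V) :
  \sum_a \sum_b \sum_w G a b w =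
  \sum_(a0 : 'I_n) \sum_(a : {ffun 'I_l.+1 -> 'I_n}) \sum_(b0 : 'I_n)
    \sum_(b : {ffun 'I_l.+1 -> 'I_n}) \sum_(w0 : 'I_d) \sum_(w : {ffun 'I_l -> 'I_d})
    G (fcons a0 a) (fcons b0 b) (fcons w0 w).
Proof.
rewrite big_ffunS; apply: eq_bigr => a0 _; apply: eq_bigr => a _.
rewrite big_ffunS; apply: eq_bigr => b0 _; apply: eq_bigr => b _.
exact: big_ffunS.
Qed.

Lemma Tw_step l : Tw l.+1 <= (n%:R * colnorm X ^+ 2) * Tw l.
Proof.
rewrite /Tw big3_ffunS.
rewrite [X in X <= _]exchange_big mulr_sumr; apply: ler_sum => a _.
rewrite [X in X <= _]big3_rot mulr_sumr; apply: ler_sum => b _.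
under eq_bigr => a0 _ do rewrite big3_rot.
rewrite [X in X <= _]exchange_big mulr_sumr; apply: ler_sum => w _.
rewrite big3_rot.
under eq_bigr => w0 _ do under eq_bigr => a0 _ do under eq_bigr => b0 _ do
  rewrite word_eval_fcons -mulmxA.
under eq_bigr => w0 _ do rewrite (sqc_ampE R m n n0).
rewrite -mulr_sumr -mulrA ler_wpM2l //.
exact: colnorm_bound_mx.
Qed.

Lemma Tw_bound l : Tw l <= Tw 0 * (n%:R * colnorm X ^+ 2) ^+ l.
Proof.
have hr : 0 <= n%:R * colnorm X ^+ 2 by rewrite mulr_ge0 // sqr_ge0.
move: hr (Tw_step); set r := n%:R * colnorm X ^+ 2 => hr hst.
elim: l => [|l IH]; first by rewrite expr0 mulr1.
apply: le_trans (hst l) _.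
by rewrite exprS mulrCA ler_wpM2l.
Qed.

Lemma level_bound (fh : coeffs R n d) l (i : 'I_(m * n)) :
  nc (level_eval fh l X i j) <= level_sqnorm fh l + Tw l.
Proof.
rewrite /level_eval /level_sqnorm /Tw summxE -big_split /=.
apply: (le_trans (nc_sum _ _ _ _ _)).
apply: ler_sum => a _.
rewrite summxE -big_split /=.
apply: (le_trans (nc_sum _ _ _ _ _)); apply: ler_sum => b _.
rewrite summxE -big_split /=.
apply: (le_trans (nc_sum _ _ _ _ _)); apply: ler_sum => w _.
rewrite mxE ComplexField.Normc.normcM; apply: (le_trans (am_gm _ _ _)).
rewrite lerD2l /sqc (bigD1 i) //= lerDl.
by apply: sumr_ge0 => r _; exact: sqr_ge0.
Qed.

End Words.

Lemma castmx_mul (T : pzSemiRingType) m1 m2 n1 n2 p1 p2 (em : m1 = m2) (en : n1 = n2)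
    (ep : p1 = p2) (A : 'M[T]_(m1, n1)) (B : 'M[T]_(n1, p1)) :
  castmx (em, en) A *m castmx (en, ep) B = castmx (em, ep) (A *m B).
Proof. by case: m2 / em; case: n2 / en; case: p2 / ep; rewrite !castmx_id. Qed.

Section DS.
Variable R : realType.
Local Notation C := R[i].
Variables (m m' n : nat).
Hypothesis n0 : (0 < n)%N.

Lemma mx_dsum_mul (A C' : 'M[C]_(m * n)) (B D : 'M[C]_(m' * n)) :
  mx_dsum A B *m mx_dsum C' D = mx_dsum (A *m C') (B *m D).
Proof.
by rewrite /mx_dsum castmx_mul mulmx_block !mulmx0 !mul0mx !addr0 !add0r.
Qed.

Lemma dsum_entry (i j : 'I_((m + m') * n)) :
  (exists i' j', forall (A : 'M[C]_(m * n)) (B : 'M[C]_(m' * n)), mx_dsum A B i j = A i' j') \/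
  (exists i' j', forall (A : 'M[C]_(m * n)) (B : 'M[C]_(m' * n)), mx_dsum A B i j = B i' j') \/
  (forall (A : 'M[C]_(m * n)) (B : 'M[C]_(m' * n)), mx_dsum A B i j = 0).
Proof.
case: (split_ordP (cast_ord (esym (esym (mulnDl m m' n))) i)) => [i1 hi|i1 hi];
case: (split_ordP (cast_ord (esym (esym (mulnDl m m' n))) j)) => [j1 hj|j1 hj].
- by left; exists i1, j1 => A B; rewrite /mx_dsum castmxE hi hj block_mxEul.
- by right; right => A B; rewrite /mx_dsum castmxE hi hj block_mxEur mxE.
- by right; right => A B; rewrite /mx_dsum castmxE hi hj block_mxEdl mxE.
- by right; left; exists i1, j1 => A B; rewrite /mx_dsum castmxE hi hj block_mxEdr.
Qed.

Lemma ampE_dsum (a b : 'I_n) :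
  ampE R (m + m') a b = mx_dsum (ampE R m a b) (ampE R m' a b).
Proof.
apply/matrixP => i j; rewrite /mx_dsum castmxE.
case: (split_ordP (cast_ord (esym (esym (mulnDl m m' n))) i)) => [i1 hi|i1 hi];
case: (split_ordP (cast_ord (esym (esym (mulnDl m m' n))) j)) => [j1 hj|j1 hj];
rewrite hi hj ?block_mxEul ?block_mxEur ?block_mxEdl ?block_mxEdr !mxE;
move/(congr1 val): hi => /= hi; move/(congr1 val): hj => /= hj; rewrite hi hj.
- by [].
- have h1 : (i1 %/ n < m)%N by rewrite ltn_divLR.
  rewrite divnMDl //.
  have -> : (i1 %/ n == m + j1 %/ n)%N = false.
    by apply/negbTE; rewrite neq_ltn (leq_trans h1) // leq_addr.
  by [].
- have h1 : (j1 %/ n < m)%N by rewrite ltn_divLR.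
  rewrite divnMDl //.
  have -> : (m + i1 %/ n == j1 %/ n)%N = false.
    by apply/negbTE; rewrite neq_ltn (leq_trans h1) ?orbT // leq_addr.
  by [].
- by rewrite !divnMDl // eqn_add2l !modnMDl.
Qed.

Variable d : nat.
Variables (X : 'I_d -> 'M[C]_(m * n)) (X' : 'I_d -> 'M[C]_(m' * n)).

Lemma word_dsum l (a b : {ffun 'I_l.+1 -> 'I_n}) (w : {ffun 'I_l -> 'I_d}) :
  word_eval a b w (dsum X X') = mx_dsum (word_eval a b w X) (word_eval a b w X').
Proof.
rewrite /word_eval; elim: (enum 'I_l) => [|k s IH] /=; first exact: ampE_dsum.
by rewrite IH ampE_dsum (_ : dsum X X' (w k) = mx_dsum (X (w k)) (X' (w k))) // !mx_dsum_mul.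
Qed.

Lemma level_dsum (fh : coeffs R n d) l i j :
  level_eval fh l (dsum X X') i j = mx_dsum (level_eval fh l X) (level_eval fh l X') i j.
Proof.
have [[i' [j' h]]|[[i' [j' h]]|h]] := dsum_entry i j; rewrite h /level_eval.
- rewrite !summxE; apply: eq_bigr => a _; rewrite !summxE; apply: eq_bigr => b _.
  by rewrite !summxE; apply: eq_bigr => w _; rewrite !mxE word_dsum h.
- rewrite !summxE; apply: eq_bigr => a _; rewrite !summxE; apply: eq_bigr => b _.
  by rewrite !summxE; apply: eq_bigr => w _; rewrite !mxE word_dsum h.
- rewrite summxE big1 // => a _; rewrite summxE big1 // => b _.
  by rewrite summxE big1 // => w _; rewrite mxE word_dsum h mulr0.
Qed.

End DS.

Lemma geom_bound (R : realType) (r : R) N : 0 <= r -> r < 1 ->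
  \sum_(l < N) r ^+ l <= (1 - r)^-1.
Proof.
move=> r0 r1.
have e : (1 - r) * \sum_(l < N) r ^+ l = 1 - r ^+ N.
  elim: N => [|N IH]; first by rewrite big_ord0 mulr0 expr0 subrr.
  by rewrite big_ord_recr /= mulrDr IH exprS; ring.
have h1 : 0 < 1 - r by rewrite subr_gt0.
rewrite -[X in X <= _](mulKf (lt0r_neq0 h1)) e; apply: ler_piMr.
  by rewrite invr_ge0 ltW.
by rewrite gerBl exprn_ge0.
Qed.

Theorem mainTheorem9 (R : realType) (n d : nat) (fh : coeffs R n d) :
  (0 < n)%N -> in_fock fh ->
  exists F : forall m : nat, ('I_d -> 'M[R[i]]_(m * n)) -> 'M[R[i]]_(m * n),
    (forall (m : nat) (X : 'I_d -> 'M[R[i]]_(m * n)),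
        (0 < m)%N -> colnorm X < 1 / Num.sqrt (n%:R) ->
        mx_cvg_to (partial_eval fh X) (F m X)) /\
    (forall (m m' : nat) (X : 'I_d -> 'M[R[i]]_(m * n))
            (X' : 'I_d -> 'M[R[i]]_(m' * n)),
        (0 < m)%N -> (0 < m')%N ->
        colnorm X < 1 / Num.sqrt (n%:R) -> colnorm X' < 1 / Num.sqrt (n%:R) ->
        F (m + m')%N (dsum X X') = mx_dsum (F m X) (F m' X')).
Proof.
move=> n0 [B hB].
exists (fun m X => \matrix_(i, j) limC R (fun l => level_eval fh l X i j)); split.
  move=> m X _ hc i j eps he.
  set c := colnorm X in hc.
  have c0 : 0 <= c by exact: colnorm_ge0.
  have sn : 0 < Num.sqrt (n%:R : R) by rewrite sqrtr_gt0 ltr0n.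
  have hr : n%:R * c ^+ 2 < 1.
    rewrite ltr_pdivlMr // in hc.
    have : (c * Num.sqrt (n%:R : R)) ^+ 2 < 1.
      by rewrite expr_lt1 // mulr_ge0 // ltW.
    by rewrite exprMn sqr_sqrtr ?ler0n // mulrC.
  have hr0 : 0 <= n%:R * c ^+ 2 by rewrite mulr_ge0 // sqr_ge0.
  set M := B + Tw R m n d X j 0 * (1 - n%:R * c ^+ 2)^-1.
  have hM : forall N, \sum_(l < N) ComplexField.Normc.normc (level_eval fh l X i j) <= M.
    move=> N.
    apply: (@le_trans _ _ (\sum_(l < N) (level_sqnorm fh l + Tw R m n d X j l))).
      by apply: ler_sum => l _; exact: level_bound.
    rewrite big_split /=; apply: lerD; first exact: hB.
    apply: (@le_trans _ _ (\sum_(l < N) Tw R m n d X j 0 * (n%:R * c ^+ 2) ^+ l)).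
      by apply: ler_sum => l _; exact: Tw_bound.
    rewrite -mulr_sumr ler_wpM2l ?geom_bound //.
    by rewrite /Tw; do 3 (apply: sumr_ge0 => ? _); exact: sqc_ge0.
  have [N0 hN0] := limC_cvg R (fun l => level_eval fh l X i j) M hM _ he.
  exists N0 => N hN; rewrite /partial_eval summxE mxE.
  exact: hN0.
move=> m m' X X' _ _ _ _.
apply/matrixP => i j; rewrite !mxE.
have e : (fun l => level_eval fh l (dsum X X') i j) =
         (fun l => mx_dsum (level_eval fh l X) (level_eval fh l X') i j).
  by apply: funext => l; exact: (level_dsum R m m' n n0 d X X' fh l i j).
rewrite e.
have [[i' [j' h]]|[[i' [j' h]]|h]] := dsum_entry R m m' n i j.
- by rewrite h mxE; congr (limC R); apply: funext => l; rewrite h.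
- by rewrite h mxE; congr (limC R); apply: funext => l; rewrite h.
- rewrite h (_ : (fun l => _) = (fun _ => 0)) ?(limC0 R) //.
  by apply: funext => l; rewrite h.
Qed.
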